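(* Let $\mathbf{B}\in\dot{\mathbb{P}}(\mathbb{L}(\mathbf{C}))$. If $\mathbf{B}$ is singular for $\mathcal{D}(\mathbf{C},\Omega)$, then $\mathbf{B}$ is irreducible for $\mathcal{D}(\mathbf{C},\Omega)$.
   Context: Events are binary random variables on a population $\Omega$; $\overline{X}=1-X$; $\mathbb{L}(\mathbf{C})=\mathbf{C}\cup\{\overline{X}:X\in\mathbf{C}\}$; $\dot{\mathbb{P}}(\mathbb{L}(\mathbf{C}))$ is the set of subsets of $\mathbb{L}(\mathbf{C})$ not containing both $X$ and $\overline{X}$; $(L)_{\mathbf{c}}$ is the value of literal $L$ under assignment $\mathbf{c}$; $\bigwedge(\mathbf{B})=\min_{L\in\mathbf{B}}L$. Potential outcomes $\mathcal{D}(\mathbf{C},\Omega)$: $D_{\mathbf{c}}(\omega)\in\{0,1\}$. $\mathbf{B}$ is a sufficient cause for $D$ relative to $\mathbf{C}$ for $\omega^*$ if some $\mathbf{c}^*$ has $(\bigwedge(\mathbf{B}))_{\mathbf{c}^*}=1$ and $D_{\mathbf{c}}(\omega^* )=1$ whenever $(\bigwedge(\mathbf{B}))_{\mathbf{c}}=1$; minimal if no proper subset is such; singular for $\omega^*$ if it is a minimal sufficient cause for $\omega^*$ and no other $\mathbf{B}'\in\dot{\mathbb{P}}(\mathbb{L}(\mathbf{C}))$ is a minimal sufficient cause for $\omega^*$; singular for $\mathcal{D}(\mathbf{C},\Omega)$ if singular for some $\omega^*\in\Omega$. A sufficient cause representation $(\mathbf{A},\mathfrak{B})$ for $\mathcal{D}(\mathbf{C},\Omega)$: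 binary random variables $\mathbf{A}=\langle A_1,\dots,A_p\rangle$ on $\Omega$ unaffected by interventions on $\mathbf{C}$ and $\mathfrak{B}=\langle\mathbf{B}_1,\dots,\mathbf{B}_p\rangle$, $\mathbf{B}_i\in\dot{\mathbb{P}}(\mathbb{L}(\mathbf{C}))$, with $D_{\mathbf{c}}(\omega)=1$ iff some $j$ has $A_j(\omega)=1$ and $(\bigwedge(\mathbf{B}_j))_{\mathbf{c}}=1$. $\mathbf{B}$ is irreducible for $\mathcal{D}(\mathbf{C},\Omega)$ if every such representation has some $\mathbf{B}_i\supseteq\mathbf{B}$. *)

(* Defs.v *)
From mathcomp Require Import all_boot.
Set Implicit Arguments. Unset Strict Implicit. Unset Printing Implicit Defensive.

(* The causes C = <X_0,...,X_{n-1}> are indexed by 'I_n.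
   A literal is a pair (i, b): (i, true) is X_i, (i, false) is its complement.
   L(C) is thus the finite type 'I_n * bool. *)
Definition literal (n : nat) := ('I_n * bool)%type.

Definition assignment (n : nat) := 'I_n -> bool.

Definition lit_val n (c : assignment n) (L : literal n) : bool :=
  if L.2 then c L.1 else ~~ c L.1.

(* B in dotP(L(C)) : no X together with its complement. *)
Definition consistent n (B : {set literal n}) : bool :=
  [forall i : 'I_n, ~~ (((i, true) \in B) && ((i, false) \in B))].

Definition conj_val n (B : {set literal n}) (c : assignment n) : bool :=
  [forall L in B, lit_val c L].

Definition outcomes (n : nat) (Omega : Type) := assignment n -> Omega -> bool.

Definition sufficient_cause n Omega (D : outcomes n Omega)
    (B : {set literal n}) (w : Omega) : Prop :=
  (exists c : assignment n, conj_val B c) /\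
  (forall c : assignment n, conj_val B c -> D c w).

Definition minimal_sufficient_cause n Omega (D : outcomes n Omega)
    (B : {set literal n}) (w : Omega) : Prop :=
  sufficient_cause D B w /\
  (forall B' : {set literal n}, B' \proper B -> ~ sufficient_cause D B' w).

Definition singular_for n Omega (D : outcomes n Omega)
    (B : {set literal n}) (w : Omega) : Prop :=
  minimal_sufficient_cause D B w /\
  (forall B' : {set literal n}, consistent B' ->
     minimal_sufficient_cause D B' w -> B' = B).

Definition singular n Omega (D : outcomes n Omega) (B : {set literal n}) : Prop :=
  exists w : Omega, singular_for D B w.

(* Sufficient cause representation (A, frakB) with p components.
   The A_j are functions of omega only, hence unaffected by interventions on C. *)
Definition sc_representation n Omega (D : outcomes n Omega) (p : nat)
    (A : 'I_p -> Omega -> bool) (Bs : 'I_p -> {set literal n}) : Prop :=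
  (forall j, consistent (Bs j)) /\
  (forall (c : assignment n) (w : Omega),
     D c w = [exists j : 'I_p, A j w && conj_val (Bs j) c]).

Definition irreducible n Omega (D : outcomes n Omega) (B : {set literal n}) : Prop :=
  forall (p : nat) (A : 'I_p -> Omega -> bool) (Bs : 'I_p -> {set literal n}),
    sc_representation D A Bs -> exists i : 'I_p, B \subset Bs i.

(* Main.v *)
From Stdlib Require Import Classical.
Require Import Defs.
From mathcomp Require Import all_boot.

Lemma cons_sat n (B : {set literal n}) : consistent B -> exists c, conj_val B c.
Proof.
move=> /forallP HB; exists (fun i => (i, true) \in B).
apply/forallP=> [[i b]]; apply/implyP=> Hin; rewrite /lit_val /=.
case: b Hin => // Hin; apply/negP=> Ht.
by move: (HB i); rewrite Ht Hin.
Qed.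

Lemma cons_sub n (B B' : {set literal n}) : B' \subset B -> consistent B -> consistent B'.
Proof.
move=> /subsetP Hs /forallP HB; apply/forallP=> i.
apply/negP=> /andP [H1 H2]; by move: (HB i); rewrite (Hs _ H1) (Hs _ H2).
Qed.

Lemma min_exists n Omega (D : outcomes n Omega) w :
  forall k (S : {set literal n}), #|S| <= k -> sufficient_cause D S w ->
  exists S' : {set literal n}, S' \subset S /\ minimal_sufficient_cause D S' w.
Proof.
elim=> [|k IH] S Hk HS.
  exists S; split => //; split => // B' /proper_card; rewrite ltnNge.
  by move/negP; case; apply: leq_trans Hk _.
case: (classic (exists B' : {set literal n}, B' \proper S /\ sufficient_cause D B' w)).
  move=> [B' [Hp HB']].
  have Hc : #|B'| <= k by have := proper_card Hp; move=> H; rewrite -ltnS; apply: leq_trans H Hk.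
  have [S' [Hs Hm]] := IH B' Hc HB'.
  exists S'; split => //; apply: subset_trans Hs (proper_sub Hp).
move=> Hn; exists S; split => //; split => // B' Hp HB'; apply: Hn; by exists B'.
Qed.

Theorem mainTheorem13 (n : nat) (Omega : Type) (D : outcomes n Omega)
    (B : {set literal n}) :
  consistent B -> singular D B -> irreducible D B.
Proof.
move=> HB [w [[[[c Hc] Hsuf] Hmin] Huniq]] p A Bs [Hcons HD].
have := Hsuf c Hc; rewrite HD => /existsP [j /andP [HA _]].
have Hsj : sufficient_cause D (Bs j) w.
  split; first exact: cons_sat.
  by move=> c' Hc'; rewrite HD; apply/existsP; exists j; rewrite HA Hc'.
have [S' [Hs Hm]] := @min_exists n Omega D w _ (Bs j) (leqnn _) Hsj.
exists j; rewrite -(Huniq S') //; exact: cons_sub Hs (Hcons j).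
Qed.
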